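(* Let $\sqrt{2} = (1.b_1 b_2 b_3 \cdots)_2$ be the binary expansion of $\sqrt 2$. For integers $n \geq 2$, let $L_n(x) = \left\lfloor \frac{x(2^n - x)}{2^{n-2}} \right\rfloor$ for $x \in X_n = \{1, 2, \dots, 2^n - 1\}$, call $n$ undesirable if there exists $x \in X_n$ with $L_n(x) = 2^{n-1}$, and let $d_N$ be the number of undesirable $n$ with $2 \le n \leq N$. If $\sqrt 2$ is simply normal to base $2$, i.e. $\lim_{n \to \infty} \frac{1}{n}\#\{1 \le i \le n : b_i = 0\} = 1/2$, then $\liminf_{N \to \infty} d_N / N \geq 1/6$. *)

(* Defs.v *)
From Stdlib Require Import Reals Lra Lia Arith List ZArith.
Open Scope R_scope.

(* i-th binary digit of sqrt 2 after the point: sqrt 2 = (1.b_1 b_2 ...)_2,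
   so b_i = floor(2^i * sqrt 2) mod 2  (Int_part is the floor). *)
Definition sqrt2_digit (i : nat) : Z :=
  Z.modulo (Int_part (sqrt 2 * 2 ^ i)) 2.

Definition zero_count (n : nat) : nat :=
  length (filter (fun i => Z.eqb (sqrt2_digit i) 0) (seq 1 n)).

(* L_n(x) = floor( x (2^n - x) / 2^(n-2) ), computed in nat (the argument is
   nonnegative for x in X_n, so nat division is the floor). *)
Definition L (n x : nat) : nat := (x * (2 ^ n - x)) / 2 ^ (n - 2).

Definition undesirable (n : nat) : Prop :=
  exists x, (1 <= x <= 2 ^ n - 1)%nat /\ L n x = (2 ^ (n - 1))%nat.

Definition undesirableb (n : nat) : bool :=
  existsb (fun x => Nat.eqb (L n x) (2 ^ (n - 1))) (seq 1 (2 ^ n - 1)).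

Lemma undesirableb_spec n : undesirableb n = true <-> undesirable n.
Proof.
  unfold undesirableb, undesirable. rewrite existsb_exists.
  split; intros [x [H1 H2]]; exists x; split.
  - apply in_seq in H1. lia.
  - now apply Nat.eqb_eq.
  - apply in_seq. lia.
  - now apply Nat.eqb_eq.
Qed.

Definition d (N : nat) : nat :=
  length (filter undesirableb (seq 2 (N - 1))).

(* Main.v *)
Require Import Defs.
From Stdlib Require Import Reals Lra Lia Arith List ZArith Psatz.
Open Scope R_scope.

Definition aa (i : nat) : Z := Int_part (sqrt 2 * 2 ^ i).

Lemma bd_range i : (0 <= sqrt2_digit i <= 1)%Z.
Proof. unfold sqrt2_digit. pose proof (Z.mod_pos_bound (Int_part (sqrt 2 * 2 ^ i)) 2). lia. Qed.

Lemma aa_rec i k : aa (i + S k) = (2 * aa (i + k) + sqrt2_digit (i + S k))%Z.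
Proof.
  unfold aa, sqrt2_digit.
  replace (sqrt 2 * 2 ^ (i + S k)) with (2 * (sqrt 2 * 2 ^ (i + k))).
  2:{ rewrite <- plus_n_Sm. simpl. ring. }
  set (x := sqrt 2 * 2 ^ (i + k)).
  destruct (base_Int_part x) as [H1 H2].
  destruct (base_Int_part (2*x)) as [H3 H4].
  set (k0 := Int_part x) in *. set (j := Int_part (2*x)) in *.
  assert (A: (2*k0 - 1 < j)%Z).
  { apply lt_IZR. rewrite minus_IZR, mult_IZR. simpl. lra. }
  assert (B: (j < 2*k0 + 2)%Z).
  { apply lt_IZR. rewrite plus_IZR, mult_IZR. simpl. lra. }
  Z.div_mod_to_equations. lia.
Qed.

Lemma good_undes m : (aa (m+6) <= 64 * aa m + 21)%Z -> undesirable (m+2).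
Proof.
  intro H.
  set (P := 2 ^ m).
  set (s := sqrt 2 * P).
  assert (HP : 0 < P) by (apply pow_lt; lra).
  assert (Hs2 : sqrt 2 * sqrt 2 = 2) by (apply sqrt_sqrt; lra).
  assert (Hsp : 0 < sqrt 2) by (apply sqrt_lt_R0; lra).
  assert (Hsl : sqrt 2 < 16/11) by nra.
  destruct (base_Int_part s) as [H1 H2].
  destruct (base_Int_part (64 * s)) as [H3 H4].
  assert (E6 : Int_part (64*s) = aa (m+6)) by (unfold aa, s, P; f_equal; rewrite pow_add; simpl; ring).
  rewrite E6 in H3, H4.
  assert (Hy : Int_part s = aa m) by reflexivity.
  rewrite Hy in H1, H2.
  apply IZR_le in H. rewrite plus_IZR, mult_IZR in H. simpl in H.
  set (y := IZR (aa m)) in *.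
  assert (ynn : (0 <= aa m)%Z).
  { assert (0 < s) by (unfold s; nra).
    assert (-1 < aa m)%Z by (apply lt_IZR; fold y; lra). lia. }
  assert (Hy0 : 0 <= y) by (unfold y; change 0 with (IZR 0); apply IZR_le; exact ynn).
  assert (Ht : s - y < 22/64) by lra.
  assert (C1 : y * y <= 2 * P * P) by (unfold s in H1; nra).
  assert (C2 : 2 * P * P - P < y * y).
  { assert (E: s * s = 2 * P * P) by (unfold s; nra).
    set (t := s - y) in *.
    assert (s*s - y*y <= 2*t*s) by (unfold t; nra).
    assert (2*t*s < 11/16 * s) by (assert (0 < s) by (unfold s; nra); nra).
    assert (11/16*s < P) by (unfold s; nra).
    lra. }
  set (yn := Z.to_nat (aa m)).
  set (Pn := (2 ^ m)%nat).
  assert (Eyn : INR yn = y) by (unfold yn, y; rewrite INR_IZR_INZ, Z2Nat.id; auto).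
  assert (EPn : INR Pn = P) by (unfold Pn, P; rewrite pow_INR; simpl; f_equal; lra).
  assert (N1 : (yn * yn <= 2 * Pn * Pn)%nat).
  { apply INR_le. rewrite !mult_INR, Eyn, EPn. simpl. lra. }
  assert (N2 : (2 * Pn * Pn < yn * yn + Pn)%nat).
  { apply INR_lt. rewrite plus_INR, !mult_INR, Eyn, EPn. simpl. lra. }
  assert (Pn1 : (1 <= Pn)%nat) by (unfold Pn; pose proof (Nat.pow_nonzero 2 m); lia).
  assert (yl : (yn < 2 * Pn)%nat) by nia.
  exists (2 * Pn - yn)%nat.
  replace (2 ^ (m + 2))%nat with (4 * Pn)%nat by (unfold Pn; rewrite Nat.pow_add_r; simpl; lia).
  replace (m + 2 - 1)%nat with (S m) by lia.
  replace (2 ^ S m)%nat with (2 * Pn)%nat by (unfold Pn; simpl; lia).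
  split; [lia|].
  unfold L.
  replace (m + 2 - 2)%nat with m by lia.
  replace (2 ^ (m + 2))%nat with (4 * Pn)%nat by (unfold Pn; rewrite Nat.pow_add_r; simpl; lia).
  fold Pn.
  replace (4 * Pn - (2 * Pn - yn))%nat with (2 * Pn + yn)%nat by lia.
  symmetry. apply Nat.div_unique with (r := (2 * Pn * Pn - yn * yn)%nat); [lia|].
  assert (E : (2 * Pn - yn + yn = 2 * Pn)%nat) by lia.
  set (w := (2 * Pn - yn)%nat) in *.
  nia.
Qed.

Fixpoint sm (f : nat -> nat) (n : nat) : nat :=
  match n with O => O | S n => (sm f n + f n)%nat end.

Lemma sm_ext f g n : (forall i, f i = g i) -> sm f n = sm g n.
Proof. intro H; induction n; simpl; auto. Qed.
Lemma sm_le f g n : (forall i, (f i <= g i)%nat) -> (sm f n <= sm g n)%nat.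
Proof. intro H; induction n; simpl; auto. specialize (H n). lia. Qed.
Lemma sm_plus f g n : sm (fun i => f i + g i)%nat n = (sm f n + sm g n)%nat.
Proof. induction n; simpl; auto. lia. Qed.
Lemma sm_shift_le f k n : (sm (fun i => f (i + k)%nat) n <= sm f (n + k))%nat.
Proof. induction n; simpl; [lia|]. lia. Qed.
Lemma sm_mono f n k : (sm f n <= sm f (n + k))%nat.
Proof. induction k; [rewrite Nat.add_0_r; lia|]. rewrite Nat.add_succ_r. simpl. lia. Qed.
Lemma sm_compl f g n : (forall i, f i + g i = 1)%nat -> (sm f n + sm g n = n)%nat.
Proof. intro H; induction n; simpl; auto. specialize (H n). lia. Qed.

Lemma len_filter (p : nat -> bool) a n :
  length (filter p (seq a n)) = sm (fun i => if p (a + i)%nat then 1 else 0)%nat n.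
Proof.
  induction n; [reflexivity|].
  rewrite seq_S, filter_app, length_app, IHn. simpl. destruct (p (a+n)%nat); simpl; lia.
Qed.

Definition dg i := sqrt2_digit i.
Definition ind (b : bool) : nat := if b then 1%nat else 0%nat.
Definition zz i := ind (Z.eqb (dg (i+1)) 0).
Definition oo i := ind (Z.eqb (dg (i+1)) 1).
Definition bad i := ind (Z.eqb (dg (i+1)) 0 && Z.eqb (dg (i+2)) 1 &&
   (Z.eqb (dg (i+3)) 1 || (Z.eqb (dg (i+4)) 1 && Z.eqb (dg (i+5)) 1))).
Definition FF i := ind (Z.eqb (dg (i+1)) 0 && Z.eqb (dg (i+2)) 1).
Definition SS i := ind (Z.eqb (dg (i+1)) 1 && Z.eqb (dg (i+2)) 1).
Definition UU i := ind (undesirableb (2 + i)).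

Ltac dig k := pose proof (bd_range k); unfold dg;
  destruct (Z.eqb_spec (sqrt2_digit k) 0); destruct (Z.eqb_spec (sqrt2_digit k) 1).

Lemma zo i : (zz i + oo i = 1)%nat.
Proof. unfold zz, oo, ind. dig (i+1)%nat; simpl; lia. Qed.

Lemma bad_le_z i : (bad i <= zz i)%nat.
Proof. unfold zz, bad, ind. dig (i+1)%nat; simpl; try lia.
  destruct (andb _ _); lia. Qed.

Lemma bad3 i : (3 * bad i <= 2 * FF i + SS (i+1) + SS (i+3))%nat.
Proof.
  unfold bad, FF, SS, ind.
  replace (i+1+1)%nat with (i+2)%nat by lia.
  replace (i+1+2)%nat with (i+3)%nat by lia.
  replace (i+3+1)%nat with (i+4)%nat by lia.
  replace (i+3+2)%nat with (i+5)%nat by lia.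
  dig (i+1)%nat; dig (i+2)%nat; dig (i+3)%nat; dig (i+4)%nat; dig (i+5)%nat;
  simpl; lia.
Qed.

Lemma FS i : (FF i + SS i <= oo (i+1))%nat.
Proof.
  unfold oo, FF, SS, ind.
  replace (i+1+1)%nat with (i+2)%nat by lia.
  dig (i+1)%nat; dig (i+2)%nat; simpl; lia.
Qed.

Lemma aa6 i : aa (i + 6) = (64 * aa i + 32 * dg (i+1) + 16 * dg (i+2) + 8 * dg (i+3)
   + 4 * dg (i+4) + 2 * dg (i+5) + dg (i+6))%Z.
Proof. unfold dg. rewrite !aa_rec. rewrite Nat.add_0_r. ring. Qed.

Lemma good_U i : (zz i - bad i <= UU i)%nat.
Proof.
  unfold UU, ind.
  destruct (undesirableb (2+i)) eqn:Eu; [pose proof (zo i); lia|].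
  assert (Hn : ~ undesirable (i+2)).
  { rewrite <- undesirableb_spec. rewrite Nat.add_comm, Eu. discriminate. }
  destruct (Nat.eq_dec (zz i - bad i) 0) as [E|E]; [rewrite E; lia|].
  exfalso. apply Hn, good_undes. rewrite aa6.
  pose proof (bd_range (i+6)). revert E. unfold zz, bad, ind.
  dig (i+1)%nat; dig (i+2)%nat; dig (i+3)%nat; dig (i+4)%nat; dig (i+5)%nat;
  cbv [andb orb]; lia.
Qed.

Lemma sm_scale c f n : sm (fun i => c * f i)%nat n = (c * sm f n)%nat.
Proof. induction n; simpl; lia. Qed.

Lemma key M : (5 * zero_count M <= 3 * d (S M) + 2 * (M + 4))%nat.
Proof.
  assert (Ez : zero_count M = sm zz M).
  { unfold zero_count. rewrite len_filter. apply sm_ext. intro i.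
    unfold zz, ind, dg. rewrite (Nat.add_comm 1 i). reflexivity. }
  assert (Ed : d (S M) = sm UU M).
  { unfold d. replace (S M - 1)%nat with M by lia. rewrite len_filter.
    apply sm_ext. reflexivity. }
  rewrite Ez, Ed.
  assert (A1 : sm zz M = (sm (fun i => zz i - bad i) M + sm bad M)%nat).
  { rewrite <- sm_plus. apply sm_ext. intro i. pose proof (bad_le_z i). lia. }
  assert (A2 : (sm (fun i => zz i - bad i) M <= sm UU M)%nat) by (apply sm_le, good_U).
  assert (A3 : (3 * sm bad M <= 2 * sm FF (M+3) + 2 * sm SS (M+3))%nat).
  { rewrite <- sm_scale.
    eapply Nat.le_trans. apply (sm_le _ (fun i => 2 * FF i + SS (i+1) + SS (i+3))%nat).
    intro i; apply bad3.
    rewrite !sm_plus, sm_scale.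
    pose proof (sm_shift_le SS 1 M). pose proof (sm_shift_le SS 3 M).
    pose proof (sm_mono FF M 3). pose proof (sm_mono SS (M+1) 2).
    replace (M+1+2)%nat with (M+3)%nat in * by lia. lia. }
  assert (A4 : (sm FF (M+3) + sm SS (M+3) <= sm oo (M+4))%nat).
  { rewrite <- sm_plus. eapply Nat.le_trans. apply (sm_le _ (fun i => oo (i+1))). apply FS.
    pose proof (sm_shift_le oo 1 (M+3)). replace (M+3+1)%nat with (M+4)%nat in * by lia. lia. }
  assert (A5 : (sm zz (M+4) + sm oo (M+4) = M+4)%nat) by (apply sm_compl, zo).
  assert (A6 : (sm zz M <= sm zz (M+4))%nat) by apply sm_mono.
  lia.
Qed.

Theorem corollary3p4 :
  Un_cv (fun n => INR (zero_count n) / INR n) (1 / 2) ->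
  forall eps : R, eps > 0 ->
    exists N0 : nat, forall N : nat, (N >= N0)%nat ->
      INR (d N) / INR N >= 1 / 6 - eps.
Proof.
  intros Hcv eps Heps.
  destruct (Hcv (eps/10)) as [M0 HM0]; [lra|].
  destruct (archimed (4/eps)) as [Ha _].
  set (K := Z.to_nat (up (4/eps))).
  assert (HK : 4/eps <= INR K).
  { unfold K. destruct (Z_lt_le_dec (up (4/eps)) 0) as [h|h].
    - assert (4/eps > 0) by (apply Rdiv_lt_0_compat; lra).
      apply IZR_lt in h. lra.
    - rewrite INR_IZR_INZ, Z2Nat.id by lia. lra. }
  exists (S (M0 + K)).
  intros N HN.
  destruct N as [|M]; [lia|].
  pose proof (key M) as Hk.
  specialize (HM0 M ltac:(lia)).
  unfold R_dist in HM0.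
  assert (HMp : 0 < INR M) by (apply lt_0_INR; assert (0 < 4/eps) by (apply Rdiv_lt_0_compat; lra);
     assert (0 < INR K) by lra; assert (K <> 0)%nat by (intro E; rewrite E in *; simpl in *; lra); lia).
  assert (HMK : INR K <= INR M) by (apply le_INR; lia).
  apply Rabs_def2 in HM0. destruct HM0 as [_ HM0].
  set (Zr := INR (zero_count M)) in *.
  set (Mr := INR M) in *.
  assert (HZ : Zr > (1/2 - eps/10) * Mr).
  { set (q := Zr / Mr) in *.
    assert (Zr = q * Mr) by (unfold q; field; lra).
    nra. }
  assert (Hk' : 5 * Zr <= 3 * INR (d (S M)) + 2 * (Mr + 4)).
  { apply le_INR in Hk. rewrite !plus_INR, !mult_INR, plus_INR in Hk.
    assert (E5: INR 5 = 5) by (simpl; lra). assert (E3: INR 3 = 3) by (simpl; lra).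
    assert (E2: INR 2 = 2) by (simpl; lra). assert (E4: INR 4 = 4) by (simpl; lra).
    rewrite E5, E3, E2, E4 in Hk. unfold Zr, Mr. lra. }
  assert (HepsM : 4 <= eps * Mr).
  { assert (eps * (4/eps) = 4) by (field; lra). nra. }
  rewrite S_INR. fold Mr.
  set (Dr := INR (d (S M))) in *.
  assert (Dr >= (1/6 - eps) * (Mr + 1)) by nra.
  apply Rle_ge. unfold Rdiv.
  apply (Rmult_le_reg_r (Mr + 1)); [lra|].
  rewrite Rmult_assoc, Rinv_l by lra. lra.
Qed.
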